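(* Let $F$ be strictly convex and twice differentiable on an open convex domain $\mathcal{X}\subseteq\mathbb{R}^d$, with Bregman divergence $D_F$, and let $\mu\ge 1$. (i) If $D_F$ is $\mu$-similar then it is $2\mu$-admissible. (ii) If $D_F$ is $\mu$-admissible then it is directionally $\mu$-admissible. (iii) $D_F$ is $\mu$-asymmetric if and only if it is directionally $(1+\mu)$-admissible.
   Context: $D_F(q,p)=F(q)-F(p)-\langle\nabla F(p),q-p\rangle$. For a site $p\in\mathcal{X}$, let $f_p(x)=D_F(x,p)$ with derivatives taken in $x$. $D_F$ is $\tau$-admissible if for all $p,x\in\mathcal{X}$: $\|\nabla f_p(x)\|\,\|x-p\|\le\tau f_p(x)$ and $\|\nabla^2 f_p(x)\|\,\|x-p\|^2\le\tau^2 f_p(x)$ (Euclidean/spectral norms). $D_F$ is directionally $\tau$-admissible if for all $p,x\in\mathcal{X}$: $\langle\nabla f_p(x),x-p\rangle\le\tau f_p(x)$. $D_F$ is $\mu$-asymmetric if $D_F(q,p)\le\mu D_F(p,q)$ for all $p,q\in\mathcal{X}$. $D_F$ is $\mu$-similar if $\|q-p\|^2\le D_F(q,p)\le\mu\|q-p\|^2$ for all $p,q\in\mathcal{X}$. *)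

(* Defs.v *)
From HB Require Import structures.
From mathcomp Require Import all_boot all_order all_algebra.
From mathcomp Require Import all_classical all_reals all_analysis.
Set Implicit Arguments. Unset Strict Implicit. Unset Printing Implicit Defensive.
Import Order.TTheory GRing.Theory Num.Theory.
Import numFieldNormedType.Exports.
Local Open Scope classical_set_scope.
Local Open Scope ring_scope.

Section Bregman.
Variables (R : realType) (d : nat).
Notation V := 'rV[R]_d.

Definition dotp (u v : V) : R := \sum_(i < d) u 0 i * v 0 i.
Definition enorm (v : V) : R := Num.sqrt (dotp v v).

Definition spec_norm (A : 'M[R]_d) : R :=
  sup [set enorm ((A *m v^T)^T) | v in [set v : V | enorm v <= 1]].

Definition grad (f : V -> R) (x : V) : V :=
  \row_(i < d) ('d f x (delta_mx 0 i : V)).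
Definition hess (f : V -> R) (x : V) : 'M[R]_d :=
  \matrix_(i < d, j < d) ('d (grad f) x (delta_mx 0 j : V)) 0 i.

Definition convex_dom (X : set V) : Prop :=
  forall x y (t : R), X x -> X y -> 0 <= t <= 1 -> X (t *: x + (1 - t) *: y).

Definition strictly_convex_on (X : set V) (F : V -> R) : Prop :=
  forall x y (t : R), X x -> X y -> x != y -> 0 < t < 1 ->
    F (t *: x + (1 - t) *: y) < t * F x + (1 - t) * F y.

Definition twice_differentiable_on (X : set V) (F : V -> R) : Prop :=
  forall x, X x -> differentiable F x /\ differentiable (grad F) x.

Definition bregman (F : V -> R) (q p : V) : R :=
  F q - F p - dotp (grad F p) (q - p).

Definition fsite (F : V -> R) (p : V) : V -> R := fun x => bregman F x p.

Definition bregman_admissible (X : set V) (F : V -> R) (tau : R) : Prop :=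
  forall p x, X p -> X x ->
    enorm (grad (fsite F p) x) * enorm (x - p) <= tau * fsite F p x /\
    spec_norm (hess (fsite F p) x) * enorm (x - p) ^+ 2 <= tau ^+ 2 * fsite F p x.

Definition bregman_dir_admissible (X : set V) (F : V -> R) (tau : R) : Prop :=
  forall p x, X p -> X x ->
    dotp (grad (fsite F p) x) (x - p) <= tau * fsite F p x.

Definition bregman_asymmetric (X : set V) (F : V -> R) (mu : R) : Prop :=
  forall p q, X p -> X q -> bregman F q p <= mu * bregman F p q.

Definition bregman_similar (X : set V) (F : V -> R) (mu : R) : Prop :=
  forall p q, X p -> X q ->
    enorm (q - p) ^+ 2 <= bregman F q p /\ bregman F q p <= mu * enorm (q - p) ^+ 2.

End Bregman.

(* Main.v *)
Set Warnings "-all".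
Require Import Defs.
From HB Require Import structures.
From mathcomp Require Import all_boot all_order all_algebra.
From mathcomp Require Import all_classical all_reals all_analysis.
From mathcomp Require Import ring lra.
Import Order.TTheory GRing.Theory Num.Theory.
Import numFieldNormedType.Exports.
Local Open Scope classical_set_scope.
Local Open Scope ring_scope.

Section Aux.
Variables (R : realType) (d : nat).
Local Notation V := 'rV[R]_d.
Local Notation dotp := (@dotp R d).
Local Notation enorm := (@enorm R d).

Lemma dotpC (u v : V) : dotp u v = dotp v u.
Proof. by apply: eq_bigr => i _; rewrite mulrC. Qed.
Lemma dotpDr (u v w : V) : dotp u (v + w) = dotp u v + dotp u w.
Proof. by rewrite /Defs.dotp -big_split; apply: eq_bigr => i _; rewrite mxE mulrDr. Qed.
Lemma dotpDl (u v w : V) : dotp (v + w) u = dotp v u + dotp w u.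
Proof. by rewrite dotpC dotpDr !(dotpC u). Qed.
Lemma dotpZr a (u v : V) : dotp u (a *: v) = a * dotp u v.
Proof. by rewrite /Defs.dotp mulr_sumr; apply: eq_bigr => i _; rewrite mxE mulrCA. Qed.
Lemma dotpZl a (u v : V) : dotp (a *: v) u = a * dotp v u.
Proof. by rewrite dotpC dotpZr dotpC. Qed.
Lemma dotpNr (u v : V) : dotp u (- v) = - dotp u v.
Proof. by rewrite -scaleN1r dotpZr mulN1r. Qed.
Lemma dotpNl (u v : V) : dotp (- v) u = - dotp v u.
Proof. by rewrite dotpC dotpNr dotpC. Qed.
Lemma dotpBr (u v w : V) : dotp u (v - w) = dotp u v - dotp u w.
Proof. by rewrite dotpDr dotpNr. Qed.
Lemma dotpBl (u v w : V) : dotp (v - w) u = dotp v u - dotp w u.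
Proof. by rewrite dotpDl dotpNl. Qed.
Lemma dotp0r (u : V) : dotp u 0 = 0.
Proof. by rewrite /Defs.dotp big1 // => i _; rewrite mxE mulr0. Qed.
Lemma dotp_ge0 (u : V) : 0 <= dotp u u.
Proof. by apply: sumr_ge0 => i _; rewrite -expr2 sqr_ge0. Qed.
Lemma enorm_ge0 (u : V) : 0 <= enorm u.
Proof. exact: sqrtr_ge0. Qed.
Lemma enorm_sq (u : V) : enorm u ^+ 2 = dotp u u.
Proof. by rewrite sqr_sqrtr // dotp_ge0. Qed.
Lemma dotp_eq0 (u : V) : dotp u u = 0 -> u = 0.
Proof.
move=> h; apply/rowP => i; rewrite mxE.
have hpos : forall j : 'I_d, true -> 0 <= u 0 j * u 0 j.
  by move=> j _; rewrite -expr2 sqr_ge0.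
have /eqP := psumr_eq0P hpos h (i:=i) isT.
by rewrite mulf_eq0 orbb => /eqP.
Qed.
Lemma enormZ a (u : V) : enorm (a *: u) = `|a| * enorm u.
Proof.
by rewrite /Defs.enorm dotpZl dotpZr mulrA -expr2 sqrtrM ?sqr_ge0 // sqrtr_sqr.
Qed.

Lemma CS (u v : V) : dotp u v <= enorm u * enorm v.
Proof.
have [->|v0] := eqVneq v 0.
  by rewrite dotp0r /Defs.enorm dotp0r sqrtr0 mulr0.
set a := enorm v; set b := enorm u.
have a0 : 0 < a.
  rewrite lt_def enorm_ge0 andbT; apply/eqP => /(congr1 (fun x => x ^+ 2)).
  by rewrite enorm_sq expr0n /= => /dotp_eq0; apply/eqP.
have := dotp_ge0 (a *: u - b *: v).
rewrite dotpBl !dotpBr !dotpZl !dotpZr -!enorm_sq -/a -/b (dotpC v u).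
move=> h.
have : a * b * dotp u v <= a * b * (a * b).
  nra.
have [b0|bpos] := eqVneq b 0.
  have u0 : u = 0.
    by apply: dotp_eq0; rewrite -enorm_sq -/b b0 expr0n.
  by rewrite u0 dotpC dotp0r mulr_ge0 ?enorm_ge0.
have ab : 0 < a * b by rewrite mulr_gt0 // lt_def bpos enorm_ge0.
by rewrite ler_pM2l // mulrC.
Qed.


Definition dotl (g : V) : V -> R := fun v => dotp g v.

Lemma dotl_lin (g : V) : linear (dotl g).
Proof. by move=> a u v; rewrite /dotl dotpDr dotpZr. Qed.

HB.instance Definition _ (g : V) := GRing.isLinear.Build R V R *:%R (dotl g) (dotl_lin g).

Lemma dotl_cont (g : V) : continuous (dotl g).
Proof.
have -> : dotl g = \sum_(i < d) (fun v : V => g 0 i * v 0 i).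
  by rewrite fct_sumE; apply/funext.
move=> x; apply: (big_ind (fun f : V -> R => {for x, continuous f})).
- exact: cst_continuous.
- by move=> f1 f2 c1 c2; apply: continuousD.
- move=> i _. have c := @coord_continuous R 1 d 0 i x. exact: (@continuousM R V (cst (g 0 i)) (fun v : V => v 0 i) x (@cst_continuous V R (g 0 i) x) c).
Qed.

Lemma dotl_diff (g x : V) : differentiable (dotl g) x /\ 'd (dotl g) x = dotl g :> (V -> R).
Proof.
split; first exact: (@linear_differentiable _ _ _ (dotl g) x (dotl_cont g)).
exact: (@diff_lin _ _ _ (dotl g) x (dotl_cont g)).
Qed.

Lemma dotp_e (g : V) (i : 'I_d) : dotp g (delta_mx 0 i) = g 0 i.
Proof.
rewrite /Defs.dotp (bigD1 i) //= big1 ?addr0; first by rewrite mxE !eqxx mulr1.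
by move=> j ji; rewrite mxE (negbTE ji) andbF mulr0.
Qed.

Lemma grad_dotp (f : V -> R) x h : differentiable f x ->
  dotp (grad f x) h = 'd f x h.
Proof.
move=> df; rewrite [in RHS](row_sum_delta h) linear_sum /Defs.dotp.
apply: eq_bigr => j _; rewrite linearZ /= /Defs.grad mxE mulrC.
done.
Qed.

Lemma fsite_decomp (F : V -> R) p :
  fsite F p = (F - cst (F p - dotp (grad F p) p)) - dotl (grad F p).
Proof.
apply/funext => y.
change (F y - F p - dotp (grad F p) (y - p) = F y - (F p - dotp (grad F p) p) - dotp (grad F p) y).
rewrite dotpBr; ring.
Qed.

Lemma diffB_at (v : V) (f h : V -> R) x : differentiable f x -> differentiable h x ->
  'd (f - h) x v = 'd f x v - 'd h x v.
Proof. by move=> df dh; rewrite diffB. Qed.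

Lemma grad_sub (f h : V -> R) x : differentiable f x -> differentiable h x ->
  grad (f - h) x = grad f x - grad h x.
Proof.
move=> df dh; apply/rowP => i; rewrite /Defs.grad !mxE.
exact: diffB_at.
Qed.

Lemma grad_cst c x : grad (cst c : V -> R) x = 0.
Proof. by apply/rowP => i; rewrite /Defs.grad !mxE diff_cst. Qed.

Lemma grad_dotl g x : grad (dotl g) x = g.
Proof. by apply/rowP => i; rewrite /Defs.grad !mxE (proj2 (dotl_diff g x)) /dotl dotp_e. Qed.

Lemma fsite_diff (F : V -> R) p x : differentiable F x ->
  differentiable (fsite F p) x /\ grad (fsite F p) x = grad F x - grad F p.
Proof.
move=> dF; set g := grad F p; have [dl ddl] := dotl_diff g x.
set c := F p - dotp g p.
have d1 : differentiable (F - cst c) x.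
  by apply: differentiableB => //; apply: differentiable_cst.
have -> : fsite F p = (F - cst c) - dotl g by exact: fsite_decomp.
split; first exact: differentiableB.
rewrite (grad_sub (F - cst c) (dotl g) x d1 dl).
rewrite (grad_sub F (cst c) x dF (differentiable_cst c x)).
by rewrite grad_cst grad_dotl subr0.
Qed.
End Aux.



Lemma near_eq_diff (R : realType) (V W : normedModType R) (f g : V -> W) (x : V) :
  differentiable f x -> (\forall y \near x, f y = g y) ->
  differentiable g x /\ 'd g x = 'd f x :> (V -> W).
Proof.
move=> df fg.
have gx : f x = g x by exact: (nbhs_singleton fg).
have sh : (fun h : V => h + x) @ (nbhs (0 : V)) --> x.
  by rewrite -[x in _ --> x]add0r; apply: cvgD; [exact: cvg_id| exact: cvg_cst].
have fg0 : \forall h \near (0 : V), f (h + x) = g (h + x) by exact: sh _ fg.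
have Hf := diff_locally df; move/eqaddoP: Hf => Hf.
have Hg : g \o shift x = cst (g x) + 'd f x +o_ (0 : V) id.
  apply/eqaddoP => eps e0; have := Hf eps e0; apply: filterS2 fg0 => h e1.
  by rewrite !fctE /= -e1 -gx.
have E : 'd g x = 'd f x :> (V -> W).
  by apply: diff_unique => //; exact: diff_continuous.
split => //; apply/diff_locallyP; rewrite E; split => //; exact: diff_continuous.
Qed.

Section T.
Variables (R : realType) (d : nat).
Local Notation V := 'rV[R]_d.
Local Notation dotp := (@dotp R d).
Local Notation enorm := (@enorm R d).

Lemma tp_gen (Fw Fy Fz : R) (gy gz w y z : V) :
  Fw - Fz - dotp gz (w - z) =
  (Fw - Fy - dotp gy (w - y)) + (Fy - Fz - dotp gz (y - z)) + dotp (gy - gz) (w - y).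
Proof.
have h1 : dotp gz (w - z) = dotp gz (w - y) + dotp gz (y - z).
  by rewrite -dotpDr addrA subrK.
rewrite h1 dotpBl.
move: (dotp gz (w - y)) (dotp gz (y - z)) (dotp gy (w - y)) => a b c.
lra.
Qed.

Lemma three_point (F : V -> R) w y z :
  bregman F w z = bregman F w y + bregman F y z + dotp (grad F y - grad F z) (w - y).
Proof. exact: tp_gen. Qed.

Lemma coco_alg (mu : R) (gy gz y z w : V) (Bwz Bwy Byz : R) : 1 <= mu ->
  w = y - (2 * mu)^-1 *: (gy - gz) ->
  Bwz = Bwy + Byz + dotp (gy - gz) (w - y) ->
  enorm (w - z) ^+ 2 <= Bwz -> Bwy <= mu * enorm (w - y) ^+ 2 ->
  Byz <= mu * enorm (y - z) ^+ 2 ->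
  enorm (gy - gz) <= (2 * mu) * enorm (y - z).
Proof.
move=> mu1 ew tp lo up1 up2.
move: (gy - gz) ew tp => g ew tp.
have wy : w - y = - ((2 * mu)^-1 *: g) by rewrite ew addrAC subrr add0r.
rewrite wy in up1 tp.
rewrite enorm_sq dotpNl dotpNr opprK dotpZl dotpZr in up1.
rewrite dotpNr dotpZr in tp.
have lo0 := sqr_ge0 (enorm (w - z)).
have ng := enorm_sq _ _ g.
set e := enorm (y - z) ^+ 2 in up2 *.
move: (dotp g g) ng up1 tp => gg ng up1 tp.
have mu0 : 0 < mu by have := mu1; lra.
have H : 0 <= mu * ((2 * mu)^-1 * ((2 * mu)^-1 * gg)) + mu * e - (2 * mu)^-1 * gg.
  rewrite tp in lo; lra.
have E : (2 * mu) * (mu * ((2 * mu)^-1 * ((2 * mu)^-1 * gg)) + mu * e - (2 * mu)^-1 * gg)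
   = ((2 * mu) ^+ 2 * e - gg) / 2.
  field; lra.
have H2 : 0 <= ((2 * mu) ^+ 2 * e - gg) / 2 by rewrite -E; apply: mulr_ge0 => //; lra.
have H3 : enorm g ^+ 2 <= ((2 * mu) * enorm (y - z)) ^+ 2.
  rewrite ng exprMn -/e; lra.
have n1 := enorm_ge0 _ _ g; have n2 := enorm_ge0 _ _ (y - z).
have n3 : 0 <= (2 * mu) * enorm (y - z) by apply: mulr_ge0 => //; lra.
move: H3 n1 n3; move: (enorm g) ((2 * mu) * enorm (y - z)) => a b.
clear; nra.
Qed.

Lemma diffB_atV (f h : V -> V) x w : differentiable f x -> differentiable h x ->
  'd (f - h) x w = 'd f x w - 'd h x w.
Proof. move=> df dh; exact: (congr1 (fun L : V -> V => L w) (diffB df dh)). Qed.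


Lemma hess_mul (f : V -> R) x (w : V) :
  (hess f x *m w^T)^T = 'd (grad f) x w.
Proof.
have -> : 'd (grad f) x w = \sum_(j < d) w 0 j *: 'd (grad f) x 'e_j.
  rewrite {1}(row_sum_delta w) linear_sum; apply: eq_bigr => j _.
  by rewrite linearZ.
apply/rowP => i; rewrite !mxE summxE; apply: eq_bigr => j _.
by rewrite !mxE mulrC.
Qed.

Lemma le_mul1 (a b : R) : 0 <= a -> b <= 1 -> a * b <= a.
Proof. move=> ha hb; nra. Qed.

Lemma sq_le (a c : R) : 0 <= a -> 0 <= c -> a ^+ 2 <= c * a -> a <= c.
Proof. move=> ha hc h; nra. Qed.

Lemma fin1 (a e f L : R) : 0 <= e -> a <= L * e -> e ^+ 2 <= f -> 0 <= L -> a * e <= L * f.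
Proof. move=> he ha hf hL; nra. Qed.

Lemma fin2 (s e2 f L : R) : s <= L -> 0 <= e2 -> e2 <= f -> 1 <= L -> s * e2 <= L ^+ 2 * f.
Proof.
move=> hs he hf hL.
have L0 : 0 <= L by lra.
have f0 : 0 <= f by lra.
have h1 : s * e2 <= L * e2 by apply: ler_wpM2r.
have h2 : L * e2 <= L * f by apply: ler_wpM2l.
have h3 : L * f <= L ^+ 2 * f.
  rewrite expr2 -mulrA; apply: ler_peMl => //; exact: mulr_ge0.
lra.
Qed.

Lemma fin3 (D a b mu : R) : D = a + b -> D <= (1 + mu) * a -> b <= mu * a.
Proof. move=> -> h; lra. Qed.

Lemma fin4 (D a b mu : R) : D = a + b -> b <= mu * a -> D <= (1 + mu) * a.
Proof. move=> -> h; lra. Qed.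

Lemma dir_gen (Fx Fp : R) (gx gp x p : V) :
  dotp (gx - gp) (x - p) = (Fx - Fp - dotp gp (x - p)) + (Fp - Fx - dotp gx (p - x)).
Proof.
have h1 : dotp gx (p - x) = - dotp gx (x - p) by rewrite -dotpNr opprB.
rewrite h1 dotpBl.
move: (dotp gx (x - p)) (dotp gp (x - p)) => a b; lra.
Qed.

Lemma dir_id (F : V -> R) p x : differentiable F x ->
  dotp (grad (fsite F p) x) (x - p) = bregman F x p + bregman F p x.
Proof.
move=> dF; have [_ gE] := fsite_diff _ _ F p x dF.
have e := congr1 (fun g => dotp g (x - p)) gE.
apply: (etrans e); exact: dir_gen.
Qed.

Section Core.
Variables (X : set V) (F : V -> R) (mu : R).
Hypotheses (oX : open X) (cX : convex_dom X) (mu1 : 1 <= mu)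
  (sim : bregman_similar X F mu) (td : twice_differentiable_on X F).
Local Notation G := (grad F).

Lemma coco y z : X y -> X z -> X (y - (2 * mu)^-1 *: (G y - G z)) ->
  enorm (G y - G z) <= (2 * mu) * enorm (y - z).
Proof.
move=> Xy Xz Xw.
have [lo _] := sim z _ Xz Xw.
have [_ up1] := sim y _ Xy Xw.
have [_ up2] := sim z y Xz Xy.
exact: (coco_alg _ _ _ _ _ _ _ _ _ mu1 erefl (three_point F _ y z) lo up1 up2).
Qed.

Lemma loclip z : X z ->
  \forall y \near z, enorm (G y - G z) <= (2 * mu) * enorm (y - z).
Proof.
move=> Xz; have [dF dG] := td _ Xz.
have nX : nbhs z X by apply: open_nbhs_nbhs; split.
have c1 : (fun y => G y - G z) @ z --> G z - G z.
  exact: (cvgB (differentiable_continuous dG) (cvg_cst _)).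
have c2 : (fun y => (2 * mu)^-1 *: (G y - G z)) @ z --> (2 * mu)^-1 *: (G z - G z).
  exact: (cvgZ (cvg_cst _) c1).
have c3 : (fun y => y - (2 * mu)^-1 *: (G y - G z)) @ z --> z - (2 * mu)^-1 *: (G z - G z).
  exact: (cvgB cvg_id c2).
have e0 : z - (2 * mu)^-1 *: (G z - G z) = z by rewrite subrr scaler0 subr0.
rewrite e0 in c3.
have wX := c3 _ nX.
apply: filterS2 nX wX => y Xy Xw; exact: coco.
Qed.

Lemma dquot_cvg z u : differentiable G z ->
  (fun s : R => s^-1 *: (G (s *: u + z) - G z)) @ 0^' --> 'd G z u.
Proof. move=> dG; rewrite -deriveE //; exact: diff_derivable. Qed.

Lemma quot_bound z u v (s : R) : s != 0 ->
  enorm (G (s *: u + z) - G z) <= (2 * mu) * enorm (s *: u + z - z) ->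
  dotp v (s^-1 *: (G (s *: u + z) - G z)) <= (2 * mu) * enorm u * enorm v.
Proof.
move=> s0 hs.
have e1 : s *: u + z - z = s *: u by rewrite addrK.
rewrite e1 enormZ in hs.
rewrite dotpC; apply: le_trans (CS _ _ _ _) _; rewrite enormZ normfV.
move: (enorm (G (s *: u + z) - G z)) hs => A hs.
have sp : 0 < `|s| by rewrite normr_gt0.
have nv := enorm_ge0 _ _ v; have nu := enorm_ge0 _ _ u.
have mu0 : 0 < mu by have := mu1; lra.
apply: (@le_trans _ _ (`|s|^-1 * ((2 * mu) * (`|s| * enorm u)) * enorm v)).
  apply: ler_wpM2r => //; apply: ler_wpM2l => //; by rewrite invr_ge0 ltW.
rewrite mulrCA mulKf ?gt_eqF //.
Qed.

Lemma dbound z u v : X z -> dotp ('d G z u) v <= (2 * mu) * enorm u * enorm v.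
Proof.
move=> Xz; have [dF dG] := td _ Xz.
have q := dquot_cvg z u dG.
have q2 := @continuous_cvg _ _ _ _ (dnbhs_filter 0) _ _ _ (dotl_cont _ _ v ('d G z u)) q.
have E : dotp ('d G z u) v = lim ((dotl _ _ v \o (fun s : R => s^-1 *: (G (s *: u + z) - G z))) @ 0^').
  by rewrite (cvg_lim _ q2) // /dotl dotpC.
rewrite E; apply: limr_le; first exact: cvgP q2.
have sz : (fun s : R => s *: u + z) @ 0 --> z.
  have hh : (fun s : R => s *: u + z) @ (nbhs (0:R)) --> 0 *: u + z.
    apply: cvgD; [apply: cvgZr_tmp; exact: cvg_id | exact: cvg_cst].
  by rewrite scale0r add0r in hh.
have ll := sz _ (loclip _ Xz).
have ll' := nbhs_dnbhs ll.
have nz : \forall s \near (0:R)^', s != 0 by exact: nbhs_dnbhs_neq.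
apply: filterS2 ll' nz => s /= hs s0.
exact: quot_bound.
Qed.

Lemma dnorm z u : X z -> enorm ('d G z u) <= (2 * mu) * enorm u.
Proof.
move=> Xz; have := dbound z u ('d G z u) Xz.
rewrite -enorm_sq => h.
have mu0 : 0 < mu by apply: lt_le_trans mu1; exact: ltr01.
apply: sq_le => //; first exact: enorm_ge0.
by apply: mulr_ge0; [apply: mulr_ge0 => //; exact: ltW | exact: enorm_ge0].
Qed.

Lemma is_derive_of (h : R -> R) t l :
  (fun s : R => s^-1 *: (h (s *: 1 + t) - h t)) @ 0^' --> l -> is_derive t 1 h l.
Proof. by move=> H; apply: DeriveDef; [exact: cvgP H | exact: cvg_lim H]. Qed.

Lemma seg_in x p t : X x -> X p -> 0 <= t <= 1 -> X (t *: (x - p) + p).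
Proof.
move=> Xx Xp t01.
have ez : t *: x + (1 - t) *: p = t *: (x - p) + p.
  rewrite scalerBl scale1r scalerBr -addrA [- _ + p]addrC //.
rewrite -ez; exact: cX.
Qed.

Lemma h_derive x p (v : V) t : X (t *: (x - p) + p) ->
  is_derive t 1 (fun t : R => dotp v (G (t *: (x - p) + p)))
    (dotp v ('d G (t *: (x - p) + p) (x - p))).
Proof.
move=> Xz; have [dF dG] := td _ Xz.
set u := x - p; set z := t *: u + p.
apply: is_derive_of.
have q := dquot_cvg z u dG.
have q2 := @continuous_cvg _ _ _ _ (dnbhs_filter 0) _ _ _ (dotl_cont _ _ v ('d G z u)) q.
have -> : (fun s : R => s^-1 *: (dotp v (G ((s%:A + t) *: u + p)) - dotp v (G (t *: u + p))))
   = dotl _ _ v \o (fun s : R => s^-1 *: (G (s *: u + z) - G z)).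
  apply/funext => s /=; rewrite /dotl.
  have sA : s%:A = s := mulr1 s.
  have e : (s%:A + t) *: u + p = s *: u + z by rewrite sA scalerDl -addrA.
  rewrite e dotpZr dotpBr //.
exact: q2.
Qed.


Lemma glob x p : X x -> X p -> enorm (G x - G p) <= (2 * mu) * enorm (x - p).
Proof.
move=> Xx Xp.
set v := G x - G p.
pose h := fun t : R => dotp v (G (t *: (x - p) + p)).
pose df := fun t : R => dotp v ('d G (t *: (x - p) + p) (x - p)).
have hd : forall t : R, 0 <= t <= 1 -> is_derive t 1 h (df t).
  by move=> t t01; apply: h_derive; exact: seg_in.
have [c c01 hc] : exists2 c, c \in `]0, 1[%R & h 1 - h 0 = df c * (1 - 0).
  apply: MVT; first exact: ltr01.
    move=> t; rewrite in_itv /= => /andP[t0 t1]; apply: hd; rewrite !ltW //.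
  apply: continuous_in_subspaceT => t /set_mem /=; rewrite in_itv /= => t01.
  have [dh _] := hd t t01.
  exact/differentiable_continuous/derivable1_diffP.
rewrite subr0 mulr1 in hc.
have e1 : 1 *: (x - p) + p = x by rewrite scale1r subrK.
have e0 : 0 *: (x - p) + p = p by rewrite scale0r add0r.
have hv : h 1 - h 0 = dotp v v by rewrite /h e1 e0 -dotpBr.
move: c01; rewrite in_itv /= => /andP[c0 c1].
have Xc : X (c *: (x - p) + p) by apply: seg_in => //; rewrite !ltW.
have db := dbound _ (x - p) v Xc.
rewrite dotpC -/(df c) -hc hv -enorm_sq in db.
have mu0 : 0 < mu by apply: lt_le_trans mu1; exact: ltr01.
apply: sq_le => //; first exact: enorm_ge0.
by apply: mulr_ge0; [apply: mulr_ge0 => //; exact: ltW | exact: enorm_ge0].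
Qed.

Lemma dgrad_fsite p x : X x -> forall w, 'd (grad (fsite F p)) x w = 'd G x w.
Proof.
move=> Xx w; have [dF dG] := td _ Xx.
have nX : nbhs x X by apply: open_nbhs_nbhs; split.
have d1 : differentiable (G - cst (G p)) x.
  exact: differentiableB dG (differentiable_cst _ _).
have ne : \forall y \near x, (G - cst (G p)) y = grad (fsite F p) y.
  apply: filterS nX => y Xy.
  have [dFy _] := td _ Xy.
  by rewrite (proj2 (fsite_diff _ _ F p y dFy)).
have [_ E] := near_eq_diff _ _ _ _ _ _ d1 ne.
have E1 := congr1 (fun L : V -> V => L w) E.
have E2 := diffB_atV G (cst (G p)) x w dG (differentiable_cst _ _).
have E3 : 'd (cst (G p) : V -> V) x w = 0 by rewrite diff_cst.
apply: (etrans E1); apply: (etrans E2).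
have E4 : forall a b : V, b = 0 -> a - b = a by move=> a b ->; rewrite subr0.
exact: E4 _ _ E3.
Qed.

Lemma spec_bound p x : X x -> spec_norm (hess (fsite F p) x) <= 2 * mu.
Proof.
move=> Xx; have m2 : 0 <= 2 * mu by have := mu1; lra.
apply: ge_sup.
  exists (enorm ((hess (fsite F p) x *m (0:V)^T)^T)); exists 0 => //.
  by rewrite /= /Defs.enorm dotp0r sqrtr0 ler01.
move=> _ [v hv <-].
rewrite hess_mul.
have hn := dnorm x v Xx.
have E := dgrad_fsite p x Xx v.
have hn' : enorm ('d (grad (fsite F p)) x v) <= 2 * mu * enorm v.
  exact: (eq_ind_r (fun a => enorm a <= 2 * mu * enorm v) hn E).
apply: le_trans hn' _.
exact: le_mul1 m2 hv.
Qed.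

End Core.
End T.

Theorem lemma8 (R : realType) (d : nat) (X : set 'rV[R]_d) (F : 'rV[R]_d -> R)
    (mu : R) :
  open X -> convex_dom X -> strictly_convex_on X F ->
  twice_differentiable_on X F -> 1 <= mu ->
  (bregman_similar X F mu -> bregman_admissible X F (2 * mu)) /\
  (bregman_admissible X F mu -> bregman_dir_admissible X F mu) /\
  (bregman_asymmetric X F mu <-> bregman_dir_admissible X F (1 + mu)).
Proof.
move=> oX cX _ td mu1; split; [|split].
- move=> sim p x Xp Xx.
  have [dFx _] := td x Xx.
  have [_ gE] := fsite_diff _ _ F p x dFx.
  have gl := glob _ _ _ _ _ oX cX mu1 sim td x p Xx Xp.
  have [lo _] := sim p x Xp Xx.
  have m2 : 0 <= 2 * mu by have := mu1; lra.
  have m3 : 1 <= 2 * mu by have := mu1; lra.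
  split.
  + have e := congr1 (@enorm R d) gE.
    have gl' : enorm (grad (fsite F p) x) <= 2 * mu * enorm (x - p).
      exact: (eq_ind_r (fun a => a <= 2 * mu * enorm (x - p)) gl e).
    exact: (fin1 _ _ _ _ _ (enorm_ge0 _ _ _) gl' lo m2).
  + have sb := spec_bound _ _ _ _ _ oX mu1 sim td p x Xx.
    exact: (fin2 _ _ _ _ _ sb (sqr_ge0 _) lo m3).
- move=> adm p x Xp Xx; have [h1 _] := adm p x Xp Xx.
  exact: le_trans (CS _ _ _ _) h1.
- split.
  + move=> asym p x Xp Xx; have [dFx _] := td x Xx.
    exact: (fin4 _ _ _ _ _ (dir_id _ _ F p x dFx) (asym x p Xx Xp)).
  + move=> dir p q Xp Xq; have [dFp _] := td p Xp.
    exact: (fin3 _ _ _ _ _ (dir_id _ _ F q p dFp) (dir q p Xq Xp)).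
Qed.
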